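(* Let $\mathcal F_1$ and $\mathcal F_2$ be completely positive maps on $M_D$ with spectral radius $1$, where $\mathcal F_1$ is trace-preserving and $\tau(\mathcal F_1)<1$. Let $\rho_1$ be the unique density matrix with $\mathcal F_1(\rho_1)=\rho_1$. Let $\xi\in M_D$ satisfy $\mathcal F_2^\dagger(\xi)=\xi$, normalised so that $\mathrm{Tr}(\rho_1\xi)=1$. Set $$k=\frac{1+\tau(\mathcal F_1)}{1-\tau(\mathcal F_1)}\,\|\mathcal F_1-\mathcal F_2\|_{1\to1}.$$ If $k<1$, then $$\|\mathbb 1-\xi\|_\infty\le\frac{k}{1-k}.$$
   Context: Notation: $M_D$ is the space of complex $D\times D$ matrices and $\|\cdot\|_p$ is the Schatten $p$-norm ($\|\cdot\|_\infty$ the operator norm). For a linear map $\mathcal F$ on $M_D$, $\|\mathcal F\|_{1\to1}:=\sup_{\sigma\ne0}\|\mathcal F(\sigma)\|_1/\|\sigma\|_1$. The dual map $\mathcal F^\dagger$ is defined by $\mathrm{Tr}(A\,\mathcal F(B))=\mathrm{Tr}(\mathcal F^\dagger(A)B)$ for all $A,B$. The ergodicity coefficient is $\tau(\mathcal F):=\sup\{\|\mathcal F(\sigma)\|_1/\|\sigma\|_1:\ 0\ne\sigma\in M_D,\ \mathrm{Tr}\,\sigma=0\}$. A trace-preserving positive map with $\tau<1$ has a unique fixed density matrix. *)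

(* Defs.v *)
From HB Require Import structures.
From mathcomp Require Import all_boot all_order all_algebra.
Set Implicit Arguments. Unset Strict Implicit. Unset Printing Implicit Defensive.
Import Order.TTheory GRing.Theory Num.Theory Num.Def.
Local Open Scope ring_scope.
Local Open Scope sesquilinear_scope.

Section Defs.
Variable C : numClosedFieldType.

Definition adjmx m n (A : 'M[C]_(m, n)) : 'M[C]_(n, m) := A ^t*.

Definition psd n (A : 'M[C]_n) : Prop :=
  forall v : 'rV[C]_n, 0 <= (v *m A *m adjmx v) 0 0.

Definition density n (rho : 'M[C]_n) : Prop := psd rho /\ \tr rho = 1.

Definition singvals n (A : 'M[C]_n) : 'I_n -> C :=
  fun i => sqrtC (spectral_diag (adjmx A *m A) 0 i).

Definition tnorm n (A : 'M[C]_n) : C := \sum_i singvals A i.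

Definition opnorm n (A : 'M[C]_n) : C := \big[Num.max/0]_i singvals A i.

Definition is_sup (S : C -> Prop) (x : C) : Prop :=
  x \is Num.real /\ (forall y, S y -> y <= x) /\
  (forall z, z \is Num.real -> (forall y, S y -> y <= z) -> x <= z).

Definition norm11_set D (F : 'M[C]_D -> 'M[C]_D) : C -> Prop :=
  fun r => exists sigma : 'M[C]_D, sigma != 0 /\ r = tnorm (F sigma) / tnorm sigma.

Definition ergodic_set D (F : 'M[C]_D -> 'M[C]_D) : C -> Prop :=
  fun r => exists sigma : 'M[C]_D, sigma != 0 /\ \tr sigma = 0 /\
                             r = tnorm (F sigma) / tnorm sigma.

(* the dual map: Tr(A F(B)) = Tr(F^dagger(A) B) *)
Definition dualmap D (F : 'M[C]_D -> 'M[C]_D) (A : 'M[C]_D) : 'M[C]_D :=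
  \matrix_(i, j) \tr (A *m F (delta_mx j i)).

Definition trace_preserving D (F : 'M[C]_D -> 'M[C]_D) : Prop :=
  forall X, \tr (F X) = \tr X.

Definition splitidx n D (k : 'I_(n * D)) : 'I_n * 'I_D :=
  pair_of_mxvec_index (mxvec_indexP k).

Definition blockof n D (X : 'M[C]_(n * D)) (a b : 'I_n) : 'M[C]_D :=
  \matrix_(i, j) X (mxvec_index a i) (mxvec_index b j).

(* the ampliation id_n (x) F acting on M_n (x) M_D = M_(n*D) *)
Definition ampl n D (F : 'M[C]_D -> 'M[C]_D) (X : 'M[C]_(n * D)) : 'M[C]_(n * D) :=
  \matrix_(k, l) F (blockof X (splitidx k).1 (splitidx l).1)
                   (splitidx k).2 (splitidx l).2.

Definition positive_map D (F : 'M[C]_D -> 'M[C]_D) : Prop :=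
  forall X, psd X -> psd (F X).

Definition completely_positive D (F : 'M[C]_D -> 'M[C]_D) : Prop :=
  forall n, positive_map (@ampl n D F).

Definition spectral_radius D (F : {linear 'M[C]_D -> 'M[C]_D}) (r : C) : Prop :=
  (exists l, eigenvalue (lin_mx F) l /\ `|l| = r) /\
  (forall l, eigenvalue (lin_mx F) l -> `|l| <= r).

End Defs.

(* Main.v *)
Require Import Defs.
From HB Require Import structures.
From mathcomp Require Import all_boot all_order all_algebra.
From mathcomp Require Import ring.
Import Order.TTheory GRing.Theory Num.Theory Num.Def.
Set Implicit Arguments. Unset Strict Implicit. Unset Printing Implicit Defensive.
Local Open Scope ring_scope.
Local Open Scope sesquilinear_scope.

Section Aux.
Variable C : numClosedFieldType.
Local Notation "''[' u , v ]" := (dotmx u v) : ring_scope.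
Local Notation "''[' u ]" := (dotmx u u) : ring_scope.

Lemma dot_ge0 n (u : 'rV[C]_n) : 0 <= '[u].
Proof. exact: dnorm_ge0. Qed.

Lemma unitaryTK n (P : 'M[C]_n) : P \is unitarymx -> P^t* *m P = 1%:M.
Proof. by move=> PU; rewrite -invmx_unitary // mulVmx // unitarymx_unit. Qed.

Lemma unitaryKT n (P : 'M[C]_n) : P \is unitarymx -> P *m P^t* = 1%:M.
Proof. by move/unitarymxP. Qed.

Lemma trCM m n p (A : 'M[C]_(m, n)) (B : 'M[C]_(n, p)) :
  (A *m B)^t* = B^t* *m A^t*.
Proof. by rewrite trmx_mul map_mxM. Qed.

Lemma dot_unitary n (u : 'rV[C]_n) (P : 'M[C]_n) : P \is unitarymx -> '[u *m P] = '[u].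
Proof.
by move=> PU; rewrite !dotmxE trCM mulmxA -(mulmxA u) unitaryKT // mulmx1.
Qed.

Lemma dotE n (u v : 'rV[C]_n) : '[u, v] = \sum_i u 0 i * (v 0 i)^*.
Proof. by rewrite dotmxE !mxE; apply: eq_bigr => i _; rewrite !mxE. Qed.

Lemma maxr_props (x y : C) : x \is Num.real -> y \is Num.real ->
  [/\ x <= maxr x y, y <= maxr x y & (maxr x y = x \/ maxr x y = y)].
Proof.
move=> xr yr; rewrite /maxr; case: ifP => xy.
  by split => //; [exact: ltW | right].
by split => //; [rewrite real_leNgt ?xy | left].
Qed.

Lemma bigmax_props n (f : 'I_n -> C) : (forall i, 0 <= f i) ->
  [/\ 0 <= \big[maxr/0]_i f i, forall i, f i <= \big[maxr/0]_i f i,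
      (\big[maxr/0]_i f i = 0 \/ exists i, \big[maxr/0]_i f i = f i) &
      forall c, 0 <= c -> (forall i, f i <= c) -> \big[maxr/0]_i f i <= c].
Proof.
move=> f0.
have fr i : f i \is Num.real by apply: ger0_real.
have mr : \big[maxr/0]_i f i \is Num.real by apply: bigmax_real.
split.
- elim/big_rec: _ => // i x _ x0.
  have [_ h _] := maxr_props (fr i) (ger0_real x0); exact: le_trans h.
- move=> i; have : i \in index_enum 'I_n by rewrite mem_index_enum.
  elim: (index_enum _) => // j r IH; rewrite inE big_cons.
  have rr : \big[maxr/0]_(i <- r) f i \is Num.real by apply: bigmax_real.
  have [h1 h2 _] := maxr_props (fr j) rr.
  by case/orP => [/eqP->//|/IH]; move/le_trans; apply.
- elim/big_rec: _; first by left.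
  move=> i x _ [->|[j ->]].
    by have [_ _ [->|->]] := maxr_props (fr i) (real0 C); [right; exists i|left].
  by have [_ _ [->|->]] := maxr_props (fr i) (fr j); right; [exists i|exists j].
- move=> c c0 fc.
  suff /andP[] : (0 <= \big[maxr/0]_i f i) && (\big[maxr/0]_i f i <= c) by [].
  elim/big_rec: _ => [|i x _ /andP[x0 xc]]; first by rewrite lexx c0.
  by have [_ _ [->|->]] := maxr_props (fr i) (ger0_real x0); rewrite ?x0 ?xc ?f0 ?fc.
Qed.
End Aux.

Section Spec.
Variable C : numClosedFieldType.
Local Notation "''[' u , v ]" := (dotmx u v) : ring_scope.
Local Notation "''[' u ]" := (dotmx u u) : ring_scope.

Lemma delta_conj n (i : 'I_n) : ('e_i : 'rV[C]_n)^t* = delta_mx i 0.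
Proof.
by apply/matrixP => a b; rewrite !mxE rmorph_nat andbC.
Qed.

Lemma entry_row n (X : 'M[C]_n) (Q : 'M[C]_n) i :
  (row i Q *m X *m (row i Q)^t*) 0 0 = (Q *m X *m Q^t*) i i.
Proof.
rewrite !rowE trCM delta_conj !mulmxA.
have -> : ('e_i : 'rV[C]_n) *m Q *m X *m Q^t* = 'e_i *m (Q *m X *m Q^t*)
  by rewrite !mulmxA.
by rewrite -rowE -colE !mxE.
Qed.

Lemma spec_decomp n (M : 'M[C]_n) : M^t* = M ->
  M = (spectralmx M)^t* *m diag_mx (spectral_diag M) *m spectralmx M /\
  spectralmx M *m M *m (spectralmx M)^t* = diag_mx (spectral_diag M).
Proof.
move=> MH.
have Mn : M \is normalmx by apply/normalmxP; rewrite MH.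
have U := spectral_unitarymx M.
have E := orthomx_spectralP Mn; rewrite invmx_unitary // in E.
split => //; move: E U; set Q := spectralmx M => E U.
by rewrite [X in Q *m X]E !mulmxA unitaryKT // mul1mx -mulmxA unitaryKT // mulmx1.
Qed.

Lemma AtA_herm n (A : 'M[C]_n) : (A^t* *m A)^t* = A^t* *m A.
Proof. by rewrite trCM trmxCK. Qed.

Definition sP n (A : 'M[C]_n) := spectralmx (A^t* *m A).
Definition sd n (A : 'M[C]_n) i := spectral_diag (A^t* *m A) 0 i.

Lemma sd_dot n (A : 'M[C]_n) i : sd A i = '[row i (sP A) *m A^t*].
Proof.
have [_ E] := spec_decomp (AtA_herm A).
rewrite /sd dotmxE trCM trmxCK !mulmxA -(mulmxA _ _ A) entry_row.
rewrite /sP; have /matrixP/(_ i i) := E; rewrite [diag_mx _ _ _]mxE eqxx mulr1n => H.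
exact: (esym H).
Qed.

Lemma sd_ge0 n (A : 'M[C]_n) i : 0 <= sd A i.
Proof. by rewrite sd_dot dot_ge0. Qed.

Lemma sP_unitary n (A : 'M[C]_n) : sP A \is unitarymx.
Proof. exact: spectral_unitarymx. Qed.

Lemma AtA_decomp n (A : 'M[C]_n) :
  A^t* *m A = (sP A)^t* *m diag_mx (spectral_diag (A^t* *m A)) *m sP A.
Proof. by have [E _] := spec_decomp (AtA_herm A). Qed.

Lemma singvalsE n (A : 'M[C]_n) i : singvals A i = sqrtC (sd A i).
Proof. by []. Qed.

Lemma singvals_ge0 n (A : 'M[C]_n) i : 0 <= singvals A i.
Proof. by rewrite singvalsE sqrtC_ge0 sd_ge0. Qed.

Lemma tnorm_ge0 n (A : 'M[C]_n) : 0 <= tnorm A.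
Proof. by apply: sumr_ge0 => i _; apply: singvals_ge0. Qed.

Lemma opnorm_props n (A : 'M[C]_n) :
  [/\ 0 <= opnorm A, forall i, singvals A i <= opnorm A,
      (opnorm A = 0 \/ exists i, opnorm A = singvals A i) &
      forall c, 0 <= c -> (forall i, singvals A i <= c) -> opnorm A <= c].
Proof. exact: bigmax_props (singvals_ge0 A). Qed.

End Spec.

Section Norms.
Variable C : numClosedFieldType.
Local Notation "''[' u , v ]" := (dotmx u v) : ring_scope.
Local Notation "''[' u ]" := (dotmx u u) : ring_scope.

Lemma opnorm_ge0 n (B : 'M[C]_n) : 0 <= opnorm B.
Proof. by have [] := opnorm_props B. Qed.

Lemma sd_le_op2 n (B : 'M[C]_n) i : sd B i <= opnorm B ^+ 2.
Proof.
have [o0 oi _ _] := opnorm_props B.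
rewrite -(ler_sqrtC (C:=C)) ?nnegrE ?sd_ge0 ?exprn_ge0 // sqrCK //.
exact: oi.
Qed.

Lemma quad_bound n (B : 'M[C]_n) (r : 'rV[C]_n) :
  '[r *m B^t*] <= opnorm B ^+ 2 * '[r].
Proof.
set P := sP B; have PU : P \is unitarymx := sP_unitary B.
have PTU : P^t* \is unitarymx by rewrite trmxC_unitary.
rewrite -(dot_unitary r PTU).
rewrite dotmxE trCM trmxCK mulmxA -(mulmxA r) AtA_decomp -/P.
have -> : r *m (P^t* *m diag_mx (spectral_diag (B^t* *m B)) *m P) *m r^t*
  = (r *m P^t*) *m diag_mx (spectral_diag (B^t* *m B)) *m (r *m P^t*)^t*.
  by rewrite trCM trmxCK !mulmxA.
set y := r *m P^t*.
rewrite dotmxE mul_mx_diag !mxE mulr_sumr; apply: ler_sum => i _.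
rewrite !mxE -/(sd B i) mulrAC [opnorm B ^+ 2 * _]mulrC.
by apply: ler_wpM2l; [rewrite mul_conjC_ge0 | exact: sd_le_op2].
Qed.

Lemma CS n (u v : 'rV[C]_n) : `|'[u, v]| <= sqrtC '[u] * sqrtC '[v].
Proof. exact: (CauchySchwarz_sqrt (@dotmx C n) u v).1. Qed.

Lemma dot_eq0 n (u : 'rV[C]_n) : ('[u] == 0) = (u == 0).
Proof. exact: (dnorm_eq0 (@dotmx C n)). Qed.

Lemma row_unit_dot n (P : 'M[C]_n) i : P \is unitarymx -> '[row i P] = 1.
Proof. by move/row_unitarymxP => /(_ i i); rewrite eqxx. Qed.

Lemma holder n (A B : 'M[C]_n) : `|\tr (A *m B)| <= tnorm A * opnorm B.
Proof.
set P := sP A; have PU : P \is unitarymx := sP_unitary A.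
have E : \tr (A *m B) = \sum_i '[row i P, row i P *m A^t* *m B^t*].
  rewrite mxtrace_mulC -[B *m A]mulmx1 -(unitaryTK PU) !mulmxA.
  rewrite -mxtrace_mulC /mxtrace; apply: eq_bigr => i _.
  rewrite dotmxE !trCM !trmxCK !mulmxA -(mulmxA _ B) -(mulmxA _ (B *m A)).
  by rewrite !mulmxA -(mulmxA (row i P) B A) entry_row !mulmxA.
rewrite E /tnorm mulr_suml; apply: le_trans (ler_norm_sum _ _ _) _.
apply: ler_sum => i _.
apply: le_trans (CS _ _) _.
rewrite row_unit_dot // sqrtC1 mul1r.
have h := quad_bound B (row i P *m A^t*).
rewrite -sd_dot -/P in h.
rewrite -(ler_sqrtC (C:=C)) ?nnegrE ?dot_ge0 ?mulr_ge0 ?exprn_ge0 ?sd_ge0 ?opnorm_ge0 // in h.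
apply: (le_trans h).
rewrite sqrtCM ?nnegrE ?exprn_ge0 ?sd_ge0 ?opnorm_ge0 //.
by rewrite sqrCK ?opnorm_ge0 // mulrC.
Qed.

Lemma opnorm_le1 n (B : 'M[C]_n) :
  (forall r : 'rV[C]_n, '[r *m B^t*] <= '[r]) -> opnorm B <= 1.
Proof.
move=> h; have [_ _ _ hd] := opnorm_props B; apply: hd => // i.
rewrite singvalsE -sqrtC1 ler_sqrtC ?nnegrE ?sd_ge0 // sd_dot.
by rewrite -(row_unit_dot i (sP_unitary B)); apply: h.
Qed.

Lemma opnorm1 n : opnorm (1%:M : 'M[C]_n) <= 1.
Proof.
apply: opnorm_le1 => r.
have -> : (1%:M : 'M[C]_n)^t* = 1%:M.
  by apply/matrixP => i j; rewrite !mxE rmorph_nat eq_sym.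
by rewrite mulmx1.
Qed.

Lemma tnorm_eq0 n (A : 'M[C]_n) : tnorm A = 0 -> A = 0.
Proof.
move=> h.
have hi i : sd A i = 0.
  have := psumr_eq0P (fun j _ => singvals_ge0 A j) h (erefl true) (i := i).
  by rewrite singvalsE => /eqP; rewrite sqrtC_eq0 => /eqP.
have PA : sP A *m A^t* = 0.
  apply/row_matrixP => i; rewrite row_mul row0; apply/eqP.
  by rewrite -dot_eq0 -sd_dot hi.
have : A^t* = 0 by rewrite -[A^t*]mul1mx -(unitaryTK (sP_unitary A)) -mulmxA PA mulmx0.
move/(congr1 (fun M => M^t*)); rewrite trmxCK => ->.
by apply/matrixP => i j; rewrite !mxE conjC0.
Qed.

Lemma tnorm_gt0 n (A : 'M[C]_n) : A != 0 -> 0 < tnorm A.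
Proof.
move=> A0; rewrite lt_def tnorm_ge0 andbT; apply: contra A0 => /eqP/tnorm_eq0->.
by [].
Qed.

End Norms.

Section Polar.
Variable C : numClosedFieldType.
Local Notation "''[' u , v ]" := (dotmx u v) : ring_scope.
Local Notation "''[' u ]" := (dotmx u u) : ring_scope.

Lemma sqrt_inv_real (x : C) : 0 <= x -> ((sqrtC x)^-1)^* = (sqrtC x)^-1.
Proof. by move=> x0; apply: conj_Creal; rewrite rpredV sqrtC_real. Qed.

Lemma polar n (A : 'M[C]_n) : exists W : 'M[C]_n,
  opnorm W <= 1 /\ \tr (W *m A) = tnorm A.
Proof.
set P := sP A; have PU : P \is unitarymx := sP_unitary A.
set e := spectral_diag (A^t* *m A).
have e0 i : 0 <= e 0 i by apply: sd_ge0.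
set g := \row_i (sqrtC (e 0 i))^-1.
have Dg : (diag_mx g)^t* = diag_mx g.
  apply/matrixP => i j; rewrite !mxE.
  have [<-|ne] := eqVneq i j; last by rewrite /= !mulr0n conjC0.
  by rewrite /= !mulr1n; exact: (sqrt_inv_real (e0 i)).
have [_ Ediag] := spec_decomp (AtA_herm A).
exists (P^t* *m diag_mx g *m P *m A^t*); split; last first.
  rewrite -mulmxA mxtrace_mulC mulmxA mxtrace_mulC !mulmxA.
  rewrite -(mulmxA P (A^t*) A) /P /sP Ediag -/e mulmx_diag mxtrace_diag.
  apply: eq_bigr => i _; rewrite !mxE /singvals -/(sd A i) /sd -/e.
  have [->|s0] := eqVneq (sqrtC (e 0 i)) 0; first by rewrite invr0 mulr0.
  by rewrite -{1}(sqrtCK (e 0 i)) expr2 mulfK.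
apply: opnorm_le1 => r.
set N := A *m P^t* *m diag_mx g.
have -> : (P^t* *m diag_mx g *m P *m A^t*)^t* = N *m P.
  by rewrite !trCM !trmxCK Dg /N !mulmxA.
rewrite mulmxA dot_unitary //.
have NN : N^t* *m N = diag_mx (\row_i (g 0 i * e 0 i * g 0 i)).
  rewrite /N !trCM !trmxCK Dg !mulmxA.
  have -> : diag_mx g *m P *m A^t* *m A *m P^t* *m diag_mx g =
    diag_mx g *m (P *m (A^t* *m A) *m P^t*) *m diag_mx g by rewrite !mulmxA.
  rewrite /P /sP Ediag -/e.
  by rewrite mulmx_diag mulmx_diag; congr diag_mx; apply/rowP => i; rewrite !mxE.
have Nd : N *m diag_mx (\row_i (g 0 i * e 0 i * g 0 i)) = N.
  rewrite /N -mulmxA mulmx_diag; congr (_ *m diag_mx _); apply/rowP => i.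
  rewrite !mxE; have [->|s0] := eqVneq (sqrtC (e 0 i)) 0; first by rewrite invr0 !mul0r.
  set s := sqrtC (e 0 i) in s0 *.
  have es : e 0 i = s * s by rewrite /s -expr2 sqrtCK.
  by rewrite es mulKf // divff // mulr1.
clearbody N.
have key : '[r *m N] = '[r, r *m N *m N^t*].
  by rewrite !dotmxE !trCM !trmxCK !mulmxA.
have key2 : '[r *m N *m N^t*] = '[r *m N].
  by rewrite !dotmxE !trCM !trmxCK -!mulmxA (mulmxA (N^t*)) NN (mulmxA N) Nd !mulmxA.
have h := CS r (r *m N *m N^t*); rewrite -key key2 in h.
set x := '[r *m N] in h *; have x0 : 0 <= x by apply: dot_ge0.
have [->|xn0] := eqVneq x 0; first exact: dot_ge0.
have sx : 0 < sqrtC x by rewrite lt_def sqrtC_eq0 xn0 sqrtC_ge0.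
have : sqrtC x <= sqrtC '[r].
  rewrite -(ler_pM2r sx); apply: le_trans h; rewrite -expr2 sqrtCK.
  by rewrite ger0_norm.
by rewrite ler_sqrtC ?nnegrE ?dot_ge0.
Qed.

End Polar.

Section Tri.
Variable C : numClosedFieldType.
Local Notation "''[' u , v ]" := (dotmx u v) : ring_scope.
Local Notation "''[' u ]" := (dotmx u u) : ring_scope.

Lemma tnorm_real n (A : 'M[C]_n) : tnorm A \is Num.real.
Proof. exact: ger0_real (tnorm_ge0 A). Qed.

Lemma tnorm_via_polar n (A : 'M[C]_n) :
  exists W : 'M[C]_n, opnorm W <= 1 /\ tnorm A <= `|\tr (W *m A)|.
Proof.
have [W [W1 WA]] := polar A; exists W; split => //.
by rewrite WA real_ler_norm // tnorm_real.
Qed.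

Lemma holder1 n (A W : 'M[C]_n) : opnorm W <= 1 -> `|\tr (W *m A)| <= tnorm A.
Proof.
move=> W1; rewrite mxtrace_mulC; apply: le_trans (holder A W) _.
by rewrite -{2}[tnorm A]mulr1 ler_wpM2l // tnorm_ge0.
Qed.

Lemma tnormD n (A B : 'M[C]_n) : tnorm (A + B) <= tnorm A + tnorm B.
Proof.
have [W [W1 h]] := tnorm_via_polar (A + B); apply: le_trans h _.
rewrite mulmxDr mxtraceD; apply: le_trans (ler_normD _ _) _.
by apply: lerD; apply: holder1.
Qed.

Lemma tnormZ n c (A : 'M[C]_n) : tnorm (c *: A) <= `|c| * tnorm A.
Proof.
have [W [W1 h]] := tnorm_via_polar (c *: A); apply: le_trans h _.
rewrite -scalemxAr mxtraceZ normrM ler_wpM2l //. exact: (holder1 A W1).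
Qed.

Lemma tnorm0 n : tnorm (0 : 'M[C]_n) = 0.
Proof.
apply/eqP; rewrite eq_le tnorm_ge0 andbT.
have [W [W1 h]] := tnorm_via_polar (0 : 'M[C]_n).
by rewrite mulmx0 mxtrace0 normr0 in h.
Qed.

Lemma tr_le_tnorm n (A : 'M[C]_n) : `|\tr A| <= tnorm A.
Proof. by rewrite -{1}[A]mul1mx; apply: holder1; apply: opnorm1. Qed.

Lemma attain n (X : 'M[C]_n) : exists sigma : 'M[C]_n,
  tnorm sigma <= 1 /\ opnorm X <= `|\tr (sigma *m X)|.
Proof.
have [o0 _ oe _] := opnorm_props X.
case: oe => [->|[j ->]].
  by exists 0; rewrite tnorm0 ler01 normr_ge0.
set s := singvals X j.
have s0 : 0 <= s by apply: singvals_ge0.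
have [->|sn0] := eqVneq s 0; first by exists 0; rewrite tnorm0 ler01 normr_ge0.
set q := row j (sP X); set w := q *m X^t*.
have ws : '[w] = s ^+ 2 by rewrite /s singvalsE sqrtCK sd_dot.
have q1 : '[q] = 1 by apply: row_unit_dot; apply: sP_unitary.
exists (s^-1 *: (q^t* *m w)); split.
  have [W [W1 h]] := tnorm_via_polar (s^-1 *: (q^t* *m w)); apply: le_trans h _.
  rewrite -scalemxAr mxtraceZ mulmxA mxtrace_mulC trace_mx11 mulmxA.
  have -> : (w *m W *m q^t*) 0 0 = '[w, q *m W^t*].
    by rewrite dotmxE trCM trmxCK mulmxA.
  rewrite normrM normfV (ger0_norm s0) ler_pdivrMl ?lt_def ?sn0 // mulr1.
  apply: le_trans (CS _ _) _.
  rewrite ws sqrCK //; rewrite -[X in _ <= X]mulr1 ler_wpM2l //.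
  have h2 := quad_bound W q; rewrite q1 mulr1 in h2.
  rewrite -sqrtC1 ler_sqrtC ?nnegrE ?dot_ge0 //; apply: le_trans h2 _.
  by rewrite -(expr1n _ 2) lerXn2r ?nnegrE ?opnorm_ge0.
rewrite -scalemxAl mxtraceZ -mulmxA mxtrace_mulC trace_mx11.
have -> : (w *m X *m q^t*) 0 0 = '[w] by rewrite dotmxE /w trCM trmxCK mulmxA.
by rewrite ws expr2 mulKf // ger0_norm.
Qed.

End Tri.

Section Herm.
Variable C : numClosedFieldType.
Local Notation "''[' u , v ]" := (dotmx u v) : ring_scope.
Local Notation "''[' u ]" := (dotmx u u) : ring_scope.

Definition qf n (A : 'M[C]_n) (u v : 'rV[C]_n) := (u *m A *m v^t*) 0 0.

Lemma trCD m n (u v : 'M[C]_(m, n)) : (u + v)^t* = u^t* + v^t*.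
Proof. by apply/matrixP => i j; rewrite !mxE rmorphD. Qed.

Lemma trCZ m n c (u : 'M[C]_(m, n)) : (c *: u)^t* = c^* *: u^t*.
Proof. by apply/matrixP => i j; rewrite !mxE rmorphM. Qed.

Lemma qfDl n (A : 'M[C]_n) u v w : qf A (u + v) w = qf A u w + qf A v w.
Proof. by rewrite /qf !mulmxDl mxE. Qed.

Lemma qfDr n (A : 'M[C]_n) u v w : qf A u (v + w) = qf A u v + qf A u w.
Proof. by rewrite /qf trCD mulmxDr mxE. Qed.

Lemma qfZl n (A : 'M[C]_n) c u v : qf A (c *: u) v = c * qf A u v.
Proof. by rewrite /qf -!scalemxAl mxE. Qed.

Lemma qfZr n (A : 'M[C]_n) c u v : qf A u (c *: v) = c^* * qf A u v.
Proof. by rewrite /qf trCZ -scalemxAr mxE. Qed.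

Lemma psd_herm n (A : 'M[C]_n) : psd A -> A^t* = A.
Proof.
move=> hA.
have re u : qf A u u \is Num.real by apply: ger0_real; exact: hA.
have key u v : qf A v u = (qf A u v)^*.
  set a := qf A u v; set b := qf A v u.
  have h1 : a + b \is Num.real.
    have := re (u + v); rewrite !qfDl !qfDr -/a -/b => h.
    have := rpredB h (rpredD (re u) (re v)).
    have -> : qf A u u + a + (b + qf A v v) - (qf A u u + qf A v v) = a + b.
      by ring.
    by [].
  have h2 : 'i * (b - a) \is Num.real.
    have := re (u + 'i *: v); rewrite !qfDl !qfDr !qfZl !qfZr -/a -/b conjCi.
    move=> h; have := rpredB h (rpredD (re u) (re v)).
    rewrite (mulrA 'i) mulrN -expr2 sqrCi.
    have -> : qf A u u + - 'i * a + ('i * b + - (-1) * qf A v v) -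
      (qf A u u + qf A v v) = 'i * (b - a) by ring.
    by [].
  move/CrealP: h1; move/CrealP: h2 => e2 e1.
  rewrite rmorphM rmorphB /= conjCi in e2. rewrite rmorphD /= in e1.
  have e2' : a^* - b^* = b - a.
    apply: (mulfI (neq0Ci C)); rewrite -e2; ring.
  have h2b : 2 * b = 2 * a^*.
    transitivity ((a + b) + (b - a)); first by ring.
    rewrite -e1 -e2'; ring.
  apply: (mulfI _ h2b); by rewrite pnatr_eq0.
apply/matrixP => i j; rewrite !mxE.
have qd a b : qf A 'e_a 'e_b = A a b by rewrite /qf delta_conj -rowE -colE !mxE.
by rewrite -qd key qd conjCK.
Qed.

End Herm.

Section Dens.
Variable C : numClosedFieldType.
Local Notation "''[' u , v ]" := (dotmx u v) : ring_scope.
Local Notation "''[' u ]" := (dotmx u u) : ring_scope.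

Lemma contr_entry n (W Q : 'M[C]_n) i : opnorm W <= 1 -> Q \is unitarymx ->
  `|(Q *m W *m Q^t*) i i| <= 1.
Proof.
move=> W1 QU; rewrite -entry_row.
have -> : (row i Q *m W *m (row i Q)^t*) 0 0 = '[row i Q, row i Q *m W^t*].
  by rewrite dotmxE trCM trmxCK mulmxA.
apply: le_trans (CS _ _) _; rewrite row_unit_dot // sqrtC1 mul1r.
have h2 := quad_bound W (row i Q); rewrite row_unit_dot // mulr1 in h2.
rewrite -sqrtC1 ler_sqrtC ?nnegrE ?dot_ge0 //; apply: le_trans h2 _.
by rewrite -(expr1n _ 2) lerXn2r ?nnegrE ?opnorm_ge0.
Qed.

Lemma tnorm_psd n (rho : 'M[C]_n) : psd rho -> tnorm rho <= \tr rho.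
Proof.
move=> hr; have [E1 E2] := spec_decomp (psd_herm hr).
move: E1 E2; set Q := spectralmx rho; set l := spectral_diag rho => E1 E2.
have QU : Q \is unitarymx := spectral_unitarymx rho.
have l0 i : 0 <= l 0 i.
  have /matrixP/(_ i i) := E2; rewrite [diag_mx _ _ _]mxE eqxx mulr1n => <-.
  by rewrite -entry_row; apply: hr.
have trl : \tr rho = \sum_i l 0 i.
  by rewrite {1}E1 mxtrace_mulC mulmxA unitaryKT // mul1mx mxtrace_diag.
have [W [W1 h]] := tnorm_via_polar rho; apply: le_trans h _.
rewrite trl {1}E1 mulmxA mxtrace_mulC !mulmxA /mxtrace.
apply: le_trans (ler_norm_sum _ _ _) _; apply: ler_sum => i _.
rewrite mul_mx_diag mxE normrM (ger0_norm (l0 i)).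
rewrite -[X in _ <= X]mul1r ler_wpM2r //; exact: contr_entry.
Qed.

End Dens.

Section LinSolve.
Variable C : numClosedFieldType.
Variable D : nat.
Variable F : {linear 'M[C]_D -> 'M[C]_D}.
Variable rho : 'M[C]_D.

Definition Lf (X : 'M[C]_D) : 'M[C]_D := X - F X + \tr X *: rho.

Fact Lf_lin : linear Lf.
Proof.
move=> a x y; rewrite /Lf linearP mxtraceD mxtraceZ scalerDl -scalerA.
rewrite scalerDr scalerBr.
by rewrite opprD (addrACA (a *: x)) (addrACA (a *: x - a *: F x)).

Qed.

HB.instance Definition _ := GRing.isLinear.Build C 'M[C]_D 'M[C]_D *:%R Lf Lf_lin.

Lemma Lf_surj : (forall X, Lf X = 0 -> X = 0) -> forall S, exists X, Lf X = S.
Proof.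
move=> inj S.
set M := lin_mx Lf.
have Mf : row_free M.
  apply: inj_row_free => v; rewrite mul_rV_lin => /eqP; rewrite mxvec_eq0 => /eqP.
  by move/inj => /(congr1 mxvec); rewrite vec_mxK linear0.
have Mu : M \in unitmx by rewrite -row_free_unit.
exists (vec_mx (mxvec S *m invmx M)).
by rewrite -[LHS]mx_rV_lin -/M mulmxKV // mxvecK.

Qed.

End LinSolve.

Section Dual.
Variable C : numClosedFieldType.

Lemma dualmapP D (F : {linear 'M[C]_D -> 'M[C]_D}) (xi A : 'M[C]_D) :
  \tr (dualmap F xi *m A) = \tr (xi *m F A).
Proof.
rewrite {2}[A]matrix_sum_delta linear_sum mulmx_sumr raddf_sum /=.
under eq_bigr do rewrite linear_sum mulmx_sumr raddf_sum.
under eq_bigr do under eq_bigr do rewrite /= linearZ /= -scalemxAr mxtraceZ.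
rewrite [LHS]/mxtrace exchange_big /=; apply: eq_bigr => i _.
rewrite mxE; apply: eq_bigr => j _; by rewrite !mxE mulrC.

Qed.

End Dual.

Lemma mxtraceB_ (R : pzRingType) n (A B : 'M[R]_n) : \tr (A - B) = \tr A - \tr B.
Proof. exact: raddfB. Qed.

Unset Implicit Arguments.
Set Strict Implicit.

Theorem mainTheorem6 (C : numClosedFieldType) (D : nat)
  (F1 F2 : {linear 'M[C]_D -> 'M[C]_D}) (rho1 xi : 'M[C]_D) (tau n12 : C) :
  completely_positive F1 -> completely_positive F2 ->
  spectral_radius F1 1 -> spectral_radius F2 1 ->
  trace_preserving F1 ->
  is_sup (ergodic_set F1) tau -> tau < 1 ->
  density rho1 -> F1 rho1 = rho1 ->
  dualmap F2 xi = xi -> \tr (rho1 *m xi) = 1 ->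
  is_sup (norm11_set (fun X => F1 X - F2 X)) n12 ->
  let k := (1 + tau) / (1 - tau) * n12 in
  k < 1 ->
  opnorm (1%:M - xi) <= k / (1 - k).
Proof.
move=> _ _ _ _ TP [taur [tauub taulub]] tau1 [rpsd rtr] Frho dxi trxi
  [nr [nub _]] k k1.
set G := fun X => F1 X - F2 X.
have Dpos : (0 < D)%N.
  rewrite lt0n; apply/negP => /eqP D0; move: rtr.
  have -> : \tr rho1 = 0 by apply: big1 => i _; have := ltn_ord i; rewrite {2}D0.
  by move/eqP; rewrite eq_sym oner_eq0.
have Bt s : \tr s = 0 -> tnorm (F1 s) <= tau * tnorm s.
  move=> ts; have [->|s0] := eqVneq s 0; first by rewrite linear0 tnorm0 mulr0.
  have := tauub _ (ex_intro _ s (conj s0 (conj ts erefl))).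
  by rewrite ler_pdivrMr ?tnorm_gt0.
have Bn s : tnorm (G s) <= n12 * tnorm s.
  have [->|s0] := eqVneq s 0.
    by rewrite /G /= !raddf0 addr0 tnorm0 mulr0.
  have := nub _ (ex_intro _ s (conj s0 erefl)).
  by rewrite ler_pdivrMr ?tnorm_gt0.
have one0 : (1%:M : 'M[C]_D) != 0.
  apply/eqP => /matrixP/(_ (Ordinal Dpos) (Ordinal Dpos)).
  by rewrite !mxE eqxx mulr1n => /eqP; rewrite oner_eq0.
have n0 : 0 <= n12.
  have := le_trans (tnorm_ge0 _) (Bn 1%:M).
  by rewrite pmulr_lge0 // tnorm_gt0.
have t0 : 0 <= tau.
  case: (boolP (0 <= tau)) => // tn'.
  have tn : tau < 0 by rewrite real_ltNge ?real0.
  have : tau <= tau - 1.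
    apply: taulub; first by rewrite rpredB ?real1.
    move=> y [s [s0 [ts ->]]]; exfalso.
    have : 0 <= tnorm (F1 s) / tnorm s by rewrite divr_ge0 ?tnorm_ge0.
    move/le_trans => /(_ _ (tauub _ (ex_intro _ s (conj s0 (conj ts erefl))))).
    by move/(lt_le_trans tn); rewrite ltxx.
  by rewrite -subr_ge0 addrAC subrr add0r oppr_ge0 ler10.
set X := 1%:M - xi.
have trrX : \tr (rho1 *m X) = 0 by rewrite /X mulmxBr mulmx1 mxtraceB_ rtr trxi subrr.
have ident A : \tr (A *m X) = \tr (F1 A *m X) + \tr (G A *m xi).
  have e2 : \tr (A *m xi) = \tr (F2 A *m xi).
    by rewrite mxtrace_mulC -{1}dxi dualmapP mxtrace_mulC.
  rewrite /X /G !mulmxBr !mulmx1 !mulmxBl !mxtraceB_ TP e2.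
  by rewrite addrA subrK.
have inj : forall Y, Lf F1 rho1 Y = 0 -> Y = 0.
  move=> Y LY.
  have tY : \tr Y = 0.
    have := congr1 mxtrace LY; rewrite /Lf mxtraceD mxtraceB_ TP subrr add0r.
    by rewrite mxtraceZ rtr mulr1 mxtrace0.
  move: LY; rewrite /Lf tY scale0r addr0 => /eqP; rewrite subr_eq0 => /eqP FY.
  apply/eqP; apply: contraT => Y0.
  have := Bt Y tY; rewrite -FY.
  have := tnorm_gt0 Y0; set t := tnorm Y => tp.
  rewrite -subr_ge0 -{2}[t]mul1r -mulrBl pmulr_lge0 // subr_ge0.
  by move/(lt_le_trans tau1); rewrite ltxx.
have [sig [sig1 hsig]] := attain X.
set A1 := sig - \tr sig *: rho1.
set S := F1 A1.
have tS : \tr S = 0 by rewrite /S TP /A1 mxtraceB_ mxtraceZ rtr mulr1 subrr.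
have [eta heta] := Lf_surj inj S.
have teta : \tr eta = 0.
  have := congr1 mxtrace heta; rewrite tS /Lf mxtraceD mxtraceB_ TP subrr add0r.
  by rewrite mxtraceZ rtr mulr1.
have eS : eta - F1 eta = S by move: heta; rewrite /Lf teta scale0r addr0.
have trsig : \tr (sig *m X) = \tr (G eta *m xi) + \tr (G sig *m xi).
  rewrite ident; congr (_ + _).
  have -> : F1 sig = S + \tr sig *: rho1.
    by rewrite /S /A1 linearB linearZ /= Frho subrK.
  rewrite mulmxDl mxtraceD -scalemxAl mxtraceZ trrX mulr0 addr0.
  by rewrite -eS mulmxBl mxtraceB_ ident addrC addKr.
have o0 : 0 <= opnorm xi := opnorm_ge0 xi.
have xiB : opnorm xi <= 1 + opnorm X.
  have [s' [s1' hs']] := attain xi; apply: le_trans hs' _.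
  have -> : xi = 1%:M - X by rewrite /X opprB addrC subrK.
  rewrite mulmxBr mulmx1 mxtraceB_; apply: le_trans (ler_normB _ _) _.
  apply: lerD; first exact: le_trans (tr_le_tnorm _) s1'.
  apply: le_trans (holder _ _) _.
  by rewrite -{2}[opnorm X]mul1r ler_wpM2r // opnorm_ge0.
have tA1 : \tr A1 = 0 by rewrite /A1 mxtraceB_ mxtraceZ rtr mulr1 subrr.
have sA1 : tnorm A1 <= tnorm sig + tnorm sig.
  rewrite /A1; apply: le_trans (tnormD _ _) _; rewrite lerD2l -scaleNr.
  apply: le_trans (tnormZ _ _) _; rewrite normrN.
  apply: le_trans (ler_wpM2l (normr_ge0 _) (tnorm_psd rpsd)) _.
  by rewrite rtr mulr1 tr_le_tnorm.
have sS : tnorm S <= tau * (tnorm sig + tnorm sig).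
  exact: le_trans (Bt _ tA1) (ler_wpM2l t0 sA1).
have seta : tnorm eta * (1 - tau) <= tnorm S.
  have e3 : eta = S + F1 eta by rewrite -eS subrK.
  have h := tnormD S (F1 eta); rewrite -e3 in h.
  have h' := le_trans h (lerD (lexx _) (Bt _ teta)).
  by rewrite mulrBr mulr1 mulrC lerBlDr.
have hsum : tnorm eta + tnorm sig <= (1 + tau) / (1 - tau).
  rewrite ler_pdivlMr ?subr_gt0 // mulrDl.
  apply: le_trans (lerD (le_trans seta sS) (lexx _)) _.
  have -> : tau * (tnorm sig + tnorm sig) + tnorm sig * (1 - tau) =
    tnorm sig * (1 + tau) by ring.
  by rewrite -[X in _ <= X]mul1r ler_wpM2r // addr_ge0 ?ler01.
have main : opnorm X <= k * opnorm xi.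
  apply: le_trans hsig _; rewrite trsig; apply: le_trans (ler_normD _ _) _.
  apply: le_trans (lerD (holder _ _) (holder _ _)) _.
  rewrite -mulrDl ler_wpM2r // /k.
  apply: le_trans (lerD (Bn eta) (Bn sig)) _.
  by rewrite -mulrDr mulrC ler_wpM2r.
have k0 : 0 <= k.
  apply: mulr_ge0 => //; apply: divr_ge0; first by rewrite addr_ge0 ?ler01.
  by rewrite subr_ge0 ltW.
have h : opnorm X <= k * (1 + opnorm X) := le_trans main (ler_wpM2l k0 xiB).
rewrite ler_pdivlMr ?subr_gt0 // mulrBr mulr1 lerBlDr.
by rewrite mulrDr mulr1 mulrC in h.
Qed.
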